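(* In the semi-classical setting, with $\Theta_n,\Omega_n$ as in the context, for every $n\ge 1$: $$\Omega_{n+1}(z) = (z-b_n)\Theta_n(z) - \Omega_n(z),$$ $$(z-b_n)\big(\Omega_{n+1}(z)-\Omega_n(z)\big) = W(z) + a_{n+1}^2\Theta_{n+1}(z) - a_n^2\Theta_{n-1}(z),$$ $$\Omega_n(z)^2 - a_n^2\Theta_n(z)\Theta_{n-1}(z) = V(z)^2 + W(z)\sum_{i=0}^{n-1}\Theta_i(z).$$
   Context: Let $(\mu_k)_{k\ge 0}$ be complex numbers such that all Hankel determinants $\det(\mu_{i+j})_{0\le i,j\le n}$ are nonzero; $\mathcal L(x^k)=\mu_k$; $p_n(z)=\gamma_n z^n+\cdots$ ($\gamma_n\ne0$) orthonormal: $\mathcal L(p_np_m)=\delta_{n,m}$; recurrence $a_{n+1}p_{n+1}(z)=(z-b_n)p_n(z)-a_np_{n-1}(z)$, $p_{-1}=0$, $a_n=\gamma_{n-1}/\gamma_n$. $f(z)=\sum_{k\ge0}\mu_k z^{-k-1}$ (formal series); $p^{(1)}_{n-1}$ is the polynomial part of $fp_n$ and $\varepsilon_n=fp_n-p^{(1)}_{n-1}$. Semi-classical: polynomials $W\not\equiv0,V,U$ with $Wf'=2Vf+U$. For $n\ge0$, $\Theta_n = W(\varepsilon_n p_n' - \varepsilon_n' p_n) + 2V\varepsilon_n p_n$, and for $n\ge1$, $\Omega_n = a_n W(\varepsilon_{n-1}p_n' - \varepsilon_n' p_{n-1}) + a_n V(\varepsilon_{n-1}p_n + \varepsilon_n p_{n-1})$;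 these are polynomials in $z$. *)

(* Defs.v *)
(* Formal Laurent series in z (finitely many positive powers)
   are represented by their coefficient functions int -> C : s k = coeff of z^k. *)
From HB Require Import structures.
From mathcomp Require Import all_boot all_order all_algebra.
Set Implicit Arguments. Unset Strict Implicit. Unset Printing Implicit Defensive.
Import Order.TTheory GRing.Theory Num.Theory.
Local Open Scope ring_scope.

Definition ser (C : Type) := int -> C.

Section Defs.
Variable C : numClosedFieldType.

Definition pser (P : {poly C}) : ser C :=
  fun k => match k with Posz n => P`_n | Negz _ => 0 end.

(* f(z) = sum_k mu_k z^{-k-1};  Negz m = -(m+1) *)
Definition fser (mu : nat -> C) : ser C :=
  fun k => match k with Posz _ => 0 | Negz m => mu m end.

Definition pmul (P : {poly C}) (s : ser C) : ser C :=
  fun k => \sum_(i < size P) P`_i * s (k - (i%:Z))%R.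

Definition sderiv (s : ser C) : ser C := fun k => (k + 1)%:~R * s (k + 1)%R.

Definition sadd (s t : ser C) : ser C := fun k => s k + t k.
Definition ssub (s t : ser C) : ser C := fun k => s k - t k.
Definition sscale (c : C) (s : ser C) : ser C := fun k => c * s k.

Definition Lfun (mu : nat -> C) (P : {poly C}) : C :=
  \sum_(i < size P) P`_i * mu i.

Definition ptrunc (N : nat) (s : ser C) : {poly C} := \poly_(i < N) s (Posz i).

(* p^{(1)}: polynomial part of f P (all coefficients of f P at z^k, k >= size P,
   vanish, so truncation at size P is exactly the polynomial part) *)
Definition p1 (mu : nat -> C) (P : {poly C}) : {poly C} :=
  ptrunc (size P) (pmul P (fser mu)).

Definition eps (mu : nat -> C) (P : {poly C}) : ser C :=
  ssub (pmul P (fser mu)) (pser (p1 mu P)).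

Definition Theta_ser (mu : nat -> C) (W V : {poly C}) (p : nat -> {poly C})
    (n : nat) : ser C :=
  sadd (pmul W (ssub (pmul (p n)^`() (eps mu (p n)))
                     (pmul (p n) (sderiv (eps mu (p n))))))
       (pmul (2%:R *: V) (pmul (p n) (eps mu (p n)))).

Definition Omega_ser (mu : nat -> C) (W V : {poly C}) (a : nat -> C)
    (p : nat -> {poly C}) (n : nat) : ser C :=
  sscale (a n)
   (sadd (pmul W (ssub (pmul (p n)^`() (eps mu (p n.-1)))
                       (pmul (p n.-1) (sderiv (eps mu (p n))))))
         (pmul V (sadd (pmul (p n) (eps mu (p n.-1)))
                       (pmul (p n.-1) (eps mu (p n)))))).

(* Theta_n and Omega_n as polynomials: their coefficients of z^k for
   k >= the bound below vanish for degree reasons, and the coefficients of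
   negative powers vanish by the (known) fact that they are polynomials. *)
Definition ThetaP (mu : nat -> C) (W V : {poly C}) (p : nat -> {poly C}) (n : nat) : {poly C} :=
  ptrunc (size W + size V + size (p n) + size (p n.-1) + 2) (Theta_ser mu W V p n).

Definition OmegaP (mu : nat -> C) (W V : {poly C}) (a : nat -> C) (p : nat -> {poly C}) (n : nat) : {poly C} :=
  ptrunc (size W + size V + size (p n) + size (p n.-1) + 2) (Omega_ser mu W V a p n).

End Defs.

(* Main.v *)
Require Import Defs.
From HB Require Import structures.
From mathcomp Require Import all_boot all_order all_algebra.
From mathcomp Require Import ring zify.
From Stdlib Require Import FunctionalExtensionality.
Import Order.TTheory GRing.Theory Num.Theory.
Local Open Scope ring_scope.
Set Implicit Arguments. Unset Strict Implicit.

Definition szero (C : numClosedFieldType) : ser C := fun _ => 0.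
Definition sh (C : numClosedFieldType) (s : ser C) : ser C := fun k => s (k - 1).

Lemma sum_coef_wide (C : numClosedFieldType) (P : {poly C}) N (F : nat -> C) :
  (size P <= N)%N -> \sum_(i < size P) P`_i * F i = \sum_(i < N) P`_i * F i.
Proof.
move=> h; rewrite (big_ord_widen N (fun i => P`_i * F i)) // big_mkcond /=.
apply: eq_bigr => i _; case: ifP => // /negbT; rewrite -leqNgt => hi.
by rewrite nth_default // mul0r.
Qed.

Lemma pmulE (C : numClosedFieldType) (P : {poly C}) s k N : (size P <= N)%N ->
  pmul P s k = \sum_(i < N) P`_i * s (k - i%:Z).
Proof. by move=> h; rewrite /pmul (sum_coef_wide (fun i => s (k - i%:Z)) h). Qed.

Lemma pmulDl (C : numClosedFieldType) (P Q : {poly C}) s :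
  pmul (P + Q) s = sadd (pmul P s) (pmul Q s).
Proof.
apply: functional_extensionality => k; rewrite /sadd.
have hP : (size P <= maxn (size P) (size Q))%N by rewrite leq_maxl.
have hQ : (size Q <= maxn (size P) (size Q))%N by rewrite leq_maxr.
rewrite (pmulE _ _ hP) (pmulE _ _ hQ) (pmulE _ _ (size_polyD P Q)) -big_split.
by apply: eq_bigr => i _; rewrite coefD mulrDl.
Qed.

Lemma pmulCl (C : numClosedFieldType) (c : C) (P : {poly C}) s :
  pmul (c%:P * P) s = sscale c (pmul P s).
Proof.
apply: functional_extensionality => k; rewrite /sscale.
have h : (size (c%:P * P)%R <= size P)%N by rewrite mul_polyC size_scale_leq.
rewrite (pmulE _ _ h) /pmul mulr_sumr.
by apply: eq_bigr => i _; rewrite coefCM mulrA.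
Qed.

Lemma pmul0l (C : numClosedFieldType) (s : ser C) : pmul 0 s = szero C.
Proof. by apply: functional_extensionality => k; rewrite /pmul size_poly0 big_ord0. Qed.

Lemma pmulNl (C : numClosedFieldType) (P : {poly C}) s :
  pmul (- P) s = sscale (-1) (pmul P s).
Proof. by rewrite -pmulCl polyCN polyC1 mulN1r. Qed.

Lemma pmul_sadd (C : numClosedFieldType) (P : {poly C}) s t :
  pmul P (sadd s t) = sadd (pmul P s) (pmul P t).
Proof.
apply: functional_extensionality => k; rewrite /sadd /pmul -big_split.
by apply: eq_bigr => i _; rewrite mulrDr.
Qed.

Lemma pmul_sscale (C : numClosedFieldType) (P : {poly C}) c s :
  pmul P (sscale c s) = sscale c (pmul P s).
Proof.
apply: functional_extensionality => k; rewrite /sscale /pmul mulr_sumr.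
by apply: eq_bigr => i _; rewrite mulrCA.
Qed.

Lemma pmul_ssub (C : numClosedFieldType) (P : {poly C}) s t :
  pmul P (ssub s t) = ssub (pmul P s) (pmul P t).
Proof.
apply: functional_extensionality => k; rewrite /ssub /pmul -sumrB.
by apply: eq_bigr => i _; rewrite mulrBr.
Qed.

Lemma pmulC (C : numClosedFieldType) (c : C) s : pmul c%:P s = sscale c s.
Proof.
apply: functional_extensionality => k; rewrite /sscale.
rewrite (pmulE _ _ (size_polyC_leq1 c)) big_ord1 coefC /=.
by rewrite subr0.
Qed.

Lemma pmulMX (C : numClosedFieldType) (P : {poly C}) s :
  pmul (P * 'X) s = pmul P (sh s).
Proof.
apply: functional_extensionality => k.
have h : (size (P * 'X)%R <= (size P).+1)%N.
  by apply: leq_trans (size_polyMleq _ _) _; rewrite size_polyX addn2.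
rewrite (pmulE _ _ h) big_ord_recl coefMX /= mul0r add0r /pmul /sh.
apply: eq_bigr => i _; rewrite coefMX /=; congr (_ * s _).
rewrite /bump /=; lia.
Qed.

Lemma sh_pmul (C : numClosedFieldType) (Q : {poly C}) s :
  sh (pmul Q s) = pmul Q (sh s).
Proof.
apply: functional_extensionality => k; rewrite /sh /pmul.
apply: eq_bigr => i _; congr (_ * s _); lia.
Qed.

Lemma sadd_szero (C : numClosedFieldType) (s : ser C) : sadd s (szero C) = s.
Proof. by apply: functional_extensionality => k; rewrite /sadd /szero addr0. Qed.

Lemma pmulA (C : numClosedFieldType) (P Q : {poly C}) s :
  pmul P (pmul Q s) = pmul (P * Q) s.
Proof.
elim/poly_ind: P s => [|P c IH] s.
  by rewrite mul0r !pmul0l.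
rewrite pmulDl pmulMX pmulC sh_pmul IH.
have -> : (P * 'X + c%:P) * Q = (P * Q) * 'X + c%:P * Q by ring.
by rewrite pmulDl pmulMX pmulCl.
Qed.

Lemma pser0 (C : numClosedFieldType) : pser (0 : {poly C}) = szero C.
Proof. by apply: functional_extensionality => -[n|n] //=; rewrite coef0. Qed.

Lemma pserD (C : numClosedFieldType) (A B : {poly C}) :
  sadd (pser A) (pser B) = pser (A + B).
Proof. by apply: functional_extensionality => -[n|n] /=; rewrite /sadd /= ?coefD ?addr0. Qed.

Lemma pserB (C : numClosedFieldType) (A B : {poly C}) :
  ssub (pser A) (pser B) = pser (A - B).
Proof. by apply: functional_extensionality => -[n|n] /=; rewrite /ssub /= ?coefB ?subr0. Qed.

Lemma pserC (C : numClosedFieldType) c (A : {poly C}) :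
  sscale c (pser A) = pser (c%:P * A).
Proof. by apply: functional_extensionality => -[n|n] /=; rewrite /sscale /= ?coefCM ?mulr0. Qed.

Lemma sh_pser (C : numClosedFieldType) (Q : {poly C}) : sh (pser Q) = pser (Q * 'X).
Proof.
apply: functional_extensionality => -[[|n]|n]; rewrite /sh.
- by rewrite (_ : Posz 0 - 1 = Negz 0) //= coefMX.
- by rewrite (_ : Posz n.+1 - 1 = Posz n) /= ?coefMX //; lia.
- by rewrite (_ : Negz n - 1 = Negz n.+1) //; lia.
Qed.

Lemma pmul_pser (C : numClosedFieldType) (P Q : {poly C}) :
  pmul P (pser Q) = pser (P * Q).
Proof.
elim/poly_ind: P Q => [|P c IH] Q.
  by rewrite mul0r pmul0l pser0.
rewrite pmulDl pmulMX pmulC sh_pser IH pserC pserD; congr pser; ring.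
Qed.

Lemma sderiv_sadd (C : numClosedFieldType) (s t : ser C) :
  sderiv (sadd s t) = sadd (sderiv s) (sderiv t).
Proof. by apply: functional_extensionality => k; rewrite /sderiv /sadd mulrDr. Qed.

Lemma sderiv_sscale (C : numClosedFieldType) c (s : ser C) :
  sderiv (sscale c s) = sscale c (sderiv s).
Proof. by apply: functional_extensionality => k; rewrite /sderiv /sscale mulrCA. Qed.

Lemma sderiv_szero (C : numClosedFieldType) : sderiv (szero C) = szero C.
Proof. by apply: functional_extensionality => k; rewrite /sderiv /szero mulr0. Qed.

Lemma sderiv_pser (C : numClosedFieldType) (P : {poly C}) :
  sderiv (pser P) = pser P^`().
Proof.
apply: functional_extensionality => -[n|[|n]]; rewrite /sderiv.
- rewrite (_ : Posz n + 1 = Posz n.+1) /=; last by lia.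
  by rewrite coef_deriv mulr_natl.
- by rewrite (_ : Negz 0 + 1 = 0) //= mul0r.
- rewrite (_ : Negz n.+1 + 1 = Negz n); last by lia. by rewrite /pser mulr0.
Qed.

Lemma sderiv_sh (C : numClosedFieldType) (s : ser C) :
  sderiv (sh s) = sadd (sh (sderiv s)) s.
Proof.
apply: functional_extensionality => k; rewrite /sderiv /sh /sadd.
by rewrite addrK subrK intrD mulrDl mul1r.
Qed.

Lemma sderiv_pmul (C : numClosedFieldType) (P : {poly C}) s :
  sderiv (pmul P s) = sadd (pmul P^`() s) (pmul P (sderiv s)).
Proof.
elim/poly_ind: P s => [|P c IH] s.
  by rewrite deriv0 !pmul0l sderiv_szero sadd_szero.
rewrite derivMXaddC !pmulDl !pmulMX !pmulC sderiv_sadd IH sderiv_sscale sderiv_sh.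
rewrite pmul_sadd.
by apply: functional_extensionality => k; rewrite /sadd /sscale; ring.
Qed.

Definition NF (C : numClosedFieldType) (mu : nat -> C) (A B Z : {poly C}) : ser C :=
  sadd (sadd (pmul A (fser mu)) (pmul B (sderiv (fser mu)))) (pser Z).

Lemma NF_pmul (C : numClosedFieldType) mu (P A B Z : {poly C}) :
  pmul P (NF mu A B Z) = NF mu (P * A) (P * B) (P * Z).
Proof. by rewrite /NF !pmul_sadd !pmulA pmul_pser. Qed.

Lemma NF_add (C : numClosedFieldType) mu (A B Z A' B' Z' : {poly C}) :
  sadd (NF mu A B Z) (NF mu A' B' Z') = NF mu (A + A') (B + B') (Z + Z').
Proof.
rewrite /NF !pmulDl -pserD.
by apply: functional_extensionality => k; rewrite /sadd; ring.
Qed.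

Lemma NF_sub (C : numClosedFieldType) mu (A B Z A' B' Z' : {poly C}) :
  ssub (NF mu A B Z) (NF mu A' B' Z') = NF mu (A - A') (B - B') (Z - Z').
Proof.
rewrite /NF !pmulDl !pmulNl -pserB.
by apply: functional_extensionality => k; rewrite /sadd /ssub /sscale; ring.
Qed.

Lemma NF_scale (C : numClosedFieldType) mu c (A B Z : {poly C}) :
  sscale c (NF mu A B Z) = NF mu (c%:P * A) (c%:P * B) (c%:P * Z).
Proof.
rewrite /NF !pmulCl -pserC.
by apply: functional_extensionality => k; rewrite /sadd /sscale; ring.
Qed.

Lemma eps_NF (C : numClosedFieldType) mu (P : {poly C}) :
  eps mu P = NF mu P 0 (- p1 mu P).
Proof.
rewrite /eps /NF pmul0l.
apply: functional_extensionality => -[n|n]; rewrite /ssub /sadd /szero /= ?coefN.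
  by ring.
by ring.
Qed.

Lemma sderiv_NF0 (C : numClosedFieldType) mu (A Z : {poly C}) :
  sderiv (NF mu A 0 Z) = NF mu A^`() A Z^`().
Proof.
rewrite /NF pmul0l !sderiv_sadd sderiv_pmul sderiv_szero sderiv_pser.
by apply: functional_extensionality => k; rewrite /sadd /szero; ring.
Qed.

Lemma NF00 (C : numClosedFieldType) mu (Z : {poly C}) : NF mu 0 0 Z = pser Z.
Proof.
rewrite /NF !pmul0l.
by apply: functional_extensionality => k; rewrite /sadd /szero; ring.
Qed.

Lemma NF_semiE (C : numClosedFieldType) mu (W V U A B Z B0 : {poly C}) :
  pmul W (sderiv (fser mu)) = sadd (pmul (2%:R *: V) (fser mu)) (pser U) ->
  B = W * B0 -> A + B0 * (V *+ 2) = 0 -> NF mu A B Z = pser (Z + B0 * U).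
Proof.
move=> HS -> hA; rewrite /NF (mulrC W) -pmulA HS pmul_sadd pmulA pmul_pser scaler_nat.
have e : pmul (A + B0 * (V *+ 2)) (fser mu) = szero C by rewrite hA pmul0l.
rewrite pmulDl in e.
apply: functional_extensionality => k.
have := congr1 (fun s => s k) e; rewrite /sadd /szero => e'.
rewrite -pserD /sadd addrA e' add0r addrC //.
Qed.

Definition ThP (C : numClosedFieldType) mu (W V U : {poly C}) (p : nat -> {poly C}) n :=
  -(U * p n ^+ 2) + W * ((p1 mu (p n))^`() * p n - p1 mu (p n) * (p n)^`())
  - V *+ 2 * (p1 mu (p n) * p n).

Definition OmP (C : numClosedFieldType) mu (W V U : {poly C}) (a : nat -> C) (p : nat -> {poly C}) n :=
  (a n)%:P * (-(U * p n * p n.-1)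
     + W * ((p1 mu (p n))^`() * p n.-1 - p1 mu (p n.-1) * (p n)^`())
     - V * (p1 mu (p n.-1) * p n + p1 mu (p n) * p n.-1)).

Lemma Theta_pser (C : numClosedFieldType) mu (W V U : {poly C}) p n :
  pmul W (sderiv (fser mu)) = sadd (pmul (2%:R *: V) (fser mu)) (pser U) ->
  Theta_ser mu W V p n = pser (ThP mu W V U p n).
Proof.
move=> HS; rewrite /Theta_ser eps_NF sderiv_NF0 !NF_pmul NF_sub NF_pmul NF_add.
rewrite (@NF_semiE _ _ W V U _ _ _ (-(p n * p n)) HS); [congr pser| |];
  rewrite ?scaler_nat /ThP; ring.
Qed.

Lemma Omega_pser (C : numClosedFieldType) mu (W V U : {poly C}) a p n :
  pmul W (sderiv (fser mu)) = sadd (pmul (2%:R *: V) (fser mu)) (pser U) ->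
  Omega_ser mu W V a p n = pser (OmP mu W V U a p n).
Proof.
move=> HS; rewrite /Omega_ser !eps_NF sderiv_NF0 !NF_pmul NF_sub NF_add !NF_pmul NF_add NF_scale.
rewrite (@NF_semiE _ _ W V U _ _ _ ((a n)%:P * -(p n.-1 * p n)) HS); [congr pser| |];
  rewrite ?scaler_nat /OmP; ring.
Qed.

Definition vanish (C : numClosedFieldType) (s : ser C) (m : int) :=
  forall k, m <= k -> s k = 0.

Lemma vanish_le (C : numClosedFieldType) (s : ser C) m m' :
  vanish s m -> m <= m' -> vanish s m'.
Proof. by move=> h hm k hk; apply: h; apply: le_trans hm hk. Qed.

Lemma vanish_pmul (C : numClosedFieldType) (P : {poly C}) s m d :
  vanish s m -> (size P <= d)%N -> vanish (pmul P s) (m + d%:Z - 1).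
Proof.
move=> hs hd k hk; rewrite /pmul; apply: big1 => i _; rewrite hs ?mulr0 //.
have := ltn_ord i; lia.
Qed.

Lemma vanish_sderiv (C : numClosedFieldType) (s : ser C) m :
  vanish s m -> vanish (sderiv s) (m - 1).
Proof. by move=> hs k hk; rewrite /sderiv hs ?mulr0 //; lia. Qed.

Lemma vanish_sadd (C : numClosedFieldType) (s t : ser C) m :
  vanish s m -> vanish t m -> vanish (sadd s t) m.
Proof. by move=> hs ht k hk; rewrite /sadd hs // ht // addr0. Qed.

Lemma vanish_ssub (C : numClosedFieldType) (s t : ser C) m :
  vanish s m -> vanish t m -> vanish (ssub s t) m.
Proof. by move=> hs ht k hk; rewrite /ssub hs // ht // subr0. Qed.

Lemma vanish_sscale (C : numClosedFieldType) c (s : ser C) m :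
  vanish s m -> vanish (sscale c s) m.
Proof. by move=> hs k hk; rewrite /sscale hs // mulr0. Qed.

Lemma size_of_vanish (C : numClosedFieldType) (P : {poly C}) (d : nat) :
  vanish (pser P) (Posz d) -> (size P <= d)%N.
Proof. by move=> h; apply/leq_sizeP => j hj; have := h (Posz j); apply. Qed.

Lemma ptrunc_pser (C : numClosedFieldType) (P : {poly C}) N :
  (size P <= N)%N -> ptrunc N (pser P) = P.
Proof.
move=> h; apply/polyP => i; rewrite /ptrunc coef_poly /=.
case: ltnP => // hi; rewrite nth_default //; exact: leq_trans h hi.
Qed.

Lemma fser_pos (C : numClosedFieldType) (mu : nat -> C) k : 0 <= k -> fser mu k = 0.
Proof. by case: k. Qed.

Lemma eps_pos (C : numClosedFieldType) mu (P : {poly C}) k :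
  0 <= k -> eps mu P k = 0.
Proof.
case: k => // j _; rewrite /eps /ssub /= /p1 /ptrunc coef_poly.
case: ltnP => hj; first by rewrite subrr.
rewrite subr0 /pmul; apply: big1 => i _; rewrite fser_pos ?mulr0 //.
have := ltn_ord i; lia.
Qed.

Definition Lm (C : numClosedFieldType) (mu : nat -> C) m (P : {poly C}) :=
  \sum_(i < size P) P`_i * mu (m + i)%N.

Lemma eps_neg (C : numClosedFieldType) mu (P : {poly C}) m :
  eps mu P (Negz m) = Lm mu m P.
Proof.
rewrite /eps /ssub /= subr0 /pmul /Lm; apply: eq_bigr => i _.
by rewrite (_ : Negz m - i%:Z = Negz (m + i)) //; lia.
Qed.

Lemma Lm_ext (C : numClosedFieldType) mu m (P : {poly C}) N :
  (size P <= N)%N -> Lm mu m P = \sum_(i < N) P`_i * mu (m + i)%N.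
Proof. by move=> h; rewrite /Lm (sum_coef_wide (fun i => mu (m + i)%N) h). Qed.

Lemma Lm_add (C : numClosedFieldType) mu m (P Q : {poly C}) :
  Lm mu m (P + Q) = Lm mu m P + Lm mu m Q.
Proof.
have hP : (size P <= maxn (size P) (size Q))%N by rewrite leq_maxl.
have hQ : (size Q <= maxn (size P) (size Q))%N by rewrite leq_maxr.
rewrite (Lm_ext _ _ hP) (Lm_ext _ _ hQ) (Lm_ext _ _ (size_polyD P Q)) -big_split.
by apply: eq_bigr => i _; rewrite coefD mulrDl.
Qed.

Lemma Lm_C (C : numClosedFieldType) mu m c (P : {poly C}) :
  Lm mu m (c%:P * P) = c * Lm mu m P.
Proof.
have h : (size (c%:P * P)%R <= size P)%N by rewrite mul_polyC size_scale_leq.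
rewrite (Lm_ext _ _ h) /Lm mulr_sumr.
by apply: eq_bigr => i _; rewrite coefCM mulrA.
Qed.

Lemma Lm_X (C : numClosedFieldType) mu m (P : {poly C}) :
  Lm mu m ('X * P) = Lm mu m.+1 P.
Proof.
have h : (size ('X * P)%R <= (size P).+1)%N.
  by rewrite mulrC; apply: leq_trans (size_polyMleq _ _) _; rewrite size_polyX addn2.
rewrite (Lm_ext _ _ h) big_ord_recl coefXM /= mul0r add0r /Lm.
by apply: eq_bigr => i _; rewrite coefXM /= addnS.
Qed.

Lemma Lm0 (C : numClosedFieldType) mu (P : {poly C}) : Lm mu 0 P = Lfun mu P.
Proof. by []. Qed.

Lemma recP (C : numClosedFieldType) (p : nat -> {poly C}) (a b : nat -> C) :
  (forall n : nat, a n.+1 *: p n.+1 =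
       ('X - (b n)%:P) * p n - (if n is 0 then 0 else a n *: p n.-1)) ->
  forall k, (a k.+2)%:P * p k.+2 = ('X - (b k.+1)%:P) * p k.+1 - (a k.+1)%:P * p k.
Proof. by move=> H k; rewrite !mul_polyC H. Qed.

Lemma orth_L (C : numClosedFieldType) mu (p : nat -> {poly C}) (a b : nat -> C) :
  (forall n : nat, size (p n) = n.+1) ->
  (forall n m : nat, Lfun mu (p n * p m) = (n == m)%:R) ->
  (forall n : nat, a n.+1 *: p n.+1 =
       ('X - (b n)%:P) * p n - (if n is 0 then 0 else a n *: p n.-1)) ->
  forall m n, (m < n)%N -> Lm mu m (p n) = 0.
Proof.
move=> Hs Ho Hr m; elim: m => [|m IH] n hn.
  have /size_poly1P [c c0 hc] : size (p 0) == 1 by rewrite Hs.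
  have := Ho n 0; rewrite hc mulrC -Lm0 Lm_C.
  rewrite (_ : (n == 0)%N = false); last by case: n hn.
  by move/eqP; rewrite mulf_eq0 (negbTE c0) /= => /eqP.
case: n hn => [|[|k]] // hn.
rewrite -Lm_X.
have -> : 'X * p k.+2 = (a k.+3)%:P * p k.+3 + (b k.+2)%:P * p k.+2 + (a k.+2)%:P * p k.+1.
  by rewrite (recP Hr); ring.
rewrite !Lm_add !Lm_C !IH //; first by rewrite !mulr0 !addr0.
all: lia.
Qed.

Lemma vanish_eps (C : numClosedFieldType) mu (p : nat -> {poly C}) (a b : nat -> C) :
  (forall n : nat, size (p n) = n.+1) ->
  (forall n m : nat, Lfun mu (p n * p m) = (n == m)%:R) ->
  (forall n : nat, a n.+1 *: p n.+1 =
       ('X - (b n)%:P) * p n - (if n is 0 then 0 else a n *: p n.-1)) ->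
  forall n, vanish (eps mu (p n)) (- n%:Z).
Proof.
move=> Hs Ho Hr n [j|j] hk; first exact: eps_pos.
rewrite eps_neg (orth_L Hs Ho Hr) //; lia.
Qed.

Lemma size_derivp (C : numClosedFieldType) (p : nat -> {poly C}) :
  (forall n : nat, size (p n) = n.+1) -> forall n, (size (p n)^`() <= n)%N.
Proof.
move=> Hs n; have hn : p n != 0 by rewrite -size_poly_eq0 Hs.
by have := lt_size_deriv hn; rewrite Hs.
Qed.

Lemma ThetaP_eq (C : numClosedFieldType) mu (p : nat -> {poly C}) (a b : nat -> C) (W V U : {poly C}) :
  (forall n : nat, size (p n) = n.+1) ->
  (forall n m : nat, Lfun mu (p n * p m) = (n == m)%:R) ->
  (forall n : nat, a n.+1 *: p n.+1 =
       ('X - (b n)%:P) * p n - (if n is 0 then 0 else a n *: p n.-1)) ->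
  pmul W (sderiv (fser mu)) = sadd (pmul (2%:R *: V) (fser mu)) (pser U) ->
  forall n, ThetaP mu W V p n = ThP mu W V U p n.
Proof.
move=> Hs Ho Hr HS n.
have hE : vanish (eps mu (p n)) (- n%:Z) := vanish_eps Hs Ho Hr (n:=n).
have hd := size_derivp Hs n.
have hv : vanish (Theta_ser mu W V p n) (Posz (size W + size V)).
  apply: vanish_sadd.
    apply: vanish_le (vanish_pmul (m := -1) _ (leqnn (size W))) _; last by lia.
    apply: vanish_ssub.
      by apply: vanish_le (vanish_pmul hE hd) _; lia.
    apply: vanish_le (vanish_pmul (vanish_sderiv hE) (eq_leq (Hs n))) _; lia.
  apply: vanish_le (vanish_pmul (m := 0) _ (size_scale_leq 2%:R V)) _; last by lia.
  apply: vanish_le (vanish_pmul hE (eq_leq (Hs n))) _; lia.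
rewrite (Theta_pser _ _ HS) in hv.
rewrite /ThetaP (Theta_pser _ _ HS) ptrunc_pser //.
by apply: leq_trans (size_of_vanish hv) _; lia.
Qed.

Lemma OmegaP_eq (C : numClosedFieldType) mu (p : nat -> {poly C}) (a b : nat -> C) (W V U : {poly C}) :
  (forall n : nat, size (p n) = n.+1) ->
  (forall n m : nat, Lfun mu (p n * p m) = (n == m)%:R) ->
  (forall n : nat, a n.+1 *: p n.+1 =
       ('X - (b n)%:P) * p n - (if n is 0 then 0 else a n *: p n.-1)) ->
  pmul W (sderiv (fser mu)) = sadd (pmul (2%:R *: V) (fser mu)) (pser U) ->
  forall n, (0 < n)%N -> OmegaP mu W V a p n = OmP mu W V U a p n.
Proof.
move=> Hs Ho Hr HS [//|k] _.
have hE1 : vanish (eps mu (p k)) (- k%:Z) := vanish_eps Hs Ho Hr (n:=k).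
have hE : vanish (eps mu (p k.+1)) (- k.+1%:Z) := vanish_eps Hs Ho Hr (n:=k.+1).
have hd := size_derivp Hs k.+1.
have hv : vanish (Omega_ser mu W V a p k.+1) (Posz (size W + size V)).
  apply: vanish_sscale; apply: vanish_sadd.
    apply: vanish_le (vanish_pmul (m := 0) _ (leqnn (size W))) _; last by lia.
    apply: vanish_ssub.
      by apply: vanish_le (vanish_pmul hE1 hd) _; lia.
    apply: vanish_le (vanish_pmul (vanish_sderiv hE) (eq_leq (Hs k))) _; lia.
  apply: vanish_le (vanish_pmul (m := 1) _ (leqnn (size V))) _; last by lia.
  apply: vanish_sadd.
    apply: vanish_le (vanish_pmul hE1 (eq_leq (Hs k.+1))) _; lia.
  apply: vanish_le (vanish_pmul hE (eq_leq (Hs k))) _; lia.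
rewrite (Omega_pser _ _ _ HS) in hv.
rewrite /OmegaP (Omega_pser _ _ _ HS) ptrunc_pser //.
by apply: leq_trans (size_of_vanish hv) _; lia.
Qed.

Lemma NF00' (C : numClosedFieldType) mu (A B Z Z' : {poly C}) :
  A = 0 -> B = 0 -> Z = Z' -> NF mu A B Z = pser Z'.
Proof. by move=> -> -> ->; rewrite NF00. Qed.

Lemma qrec (C : numClosedFieldType) mu (p : nat -> {poly C}) (a b : nat -> C) :
  (forall n : nat, size (p n) = n.+1) ->
  (forall n m : nat, Lfun mu (p n * p m) = (n == m)%:R) ->
  (forall n : nat, a n.+1 *: p n.+1 =
       ('X - (b n)%:P) * p n - (if n is 0 then 0 else a n *: p n.-1)) ->
  forall k, (a k.+2)%:P * p1 mu (p k.+2)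
     = ('X - (b k.+1)%:P) * p1 mu (p k.+1) - (a k.+1)%:P * p1 mu (p k).
Proof.
move=> Hs Ho Hr k.
set Z := (a k.+2)%:P * p1 mu (p k.+2)
     - (('X - (b k.+1)%:P) * p1 mu (p k.+1) - (a k.+1)%:P * p1 mu (p k)).
suff : Z = 0 by move/eqP; rewrite subr_eq0 => /eqP.
have hE2 : vanish (eps mu (p k.+2)) (- k.+2%:Z) := vanish_eps Hs Ho Hr (n:=k.+2).
have hE1 : vanish (eps mu (p k.+1)) (- k.+1%:Z) := vanish_eps Hs Ho Hr (n:=k.+1).
have hE0 : vanish (eps mu (p k)) (- k%:Z) := vanish_eps Hs Ho Hr (n:=k).
set S := sadd (ssub (pmul (a k.+2)%:P (eps mu (p k.+2)))
                    (pmul ('X - (b k.+1)%:P) (eps mu (p k.+1))))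
              (pmul (a k.+1)%:P (eps mu (p k))).
have hS : vanish S 0.
  apply: vanish_sadd.
    apply: vanish_ssub.
      by apply: vanish_le (vanish_pmul hE2 (size_polyC_leq1 _)) _; lia.
    by apply: vanish_le (vanish_pmul hE1 (eq_leq (size_XsubC _))) _; lia.
  by apply: vanish_le (vanish_pmul hE0 (size_polyC_leq1 _)) _; lia.
have eS : S = pser (- Z).
  rewrite /S !eps_NF !NF_pmul NF_sub NF_add; apply: NF00'.
  - by rewrite (recP Hr); ring.
  - by ring.
  - by rewrite /Z; ring.
rewrite eS in hS.
have := size_of_vanish hS; rewrite size_poly_leq0 oppr_eq0 => /eqP //.
Qed.

Lemma deriv_rec (C : numClosedFieldType) (A B : C) (b : C) (P2 P1 P0 : {poly C}) :
  B%:P * P2 = ('X - b%:P) * P1 - A%:P * P0 ->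
  B%:P * P2^`() = P1 + ('X - b%:P) * P1^`() - A%:P * P0^`().
Proof.
move=> h; transitivity (B%:P * P2)^`(); first by rewrite derivE.
by rewrite h !derivE; ring.
Qed.

Lemma p1_high (C : numClosedFieldType) mu (P : {poly C}) j :
  ((size P).-1 <= j)%N -> (p1 mu P)`_j = 0.
Proof.
move=> hj; rewrite /p1 /ptrunc coef_poly; case: ifP => // _.
apply: big1 => i _; rewrite fser_pos ?mulr0 //.
have := ltn_ord i; lia.
Qed.


Lemma base_facts (C : numClosedFieldType) mu (p : nat -> {poly C}) (a : nat -> C) :
  (forall n : nat, size (p n) = n.+1) ->
  (forall n m : nat, Lfun mu (p n * p m) = (n == m)%:R) ->
  (forall n : nat, (0 < n)%N -> a n = lead_coef (p n.-1) / lead_coef (p n)) ->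
  p1 mu (p 0) = 0 /\
  exists c d g, [/\ p 0 = c%:P, p1 mu (p 1) = d%:P, (p 1)^`() = g%:P,
                    a 1 * (d * c) = 1 & a 1 * g = c].
Proof.
move=> Hs Ho Ha; split.
  apply/eqP; rewrite -size_poly_leq0; apply/leq_sizeP => j _; apply: p1_high.
  by rewrite Hs.
set c := (p 0)`_0; set g := (p 1)`_1.
have hp0 : p 0 = c%:P by apply: size1_polyC; rewrite Hs.
have c0 : c != 0.
  by rewrite -polyC_eq0 -hp0 -size_poly_eq0 Hs.
have hg : lead_coef (p 1) = g by rewrite lead_coefE Hs.
have g0 : g != 0 by rewrite -hg lead_coef_eq0 -size_poly_eq0 Hs.
have hp1' : (p 1)^`() = g%:P.
  rewrite [LHS]size1_polyC; last by have := size_derivp Hs 1.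
  by rewrite coef_deriv mulr1n.
have hq1 : p1 mu (p 1) = (g * mu 0)%:P.
  rewrite [LHS]size1_polyC; last first.
    by apply/leq_sizeP => j hj; apply: p1_high; rewrite Hs.
  congr polyC; rewrite /p1 /ptrunc coef_poly Hs /= /pmul Hs big_ord_recl big_ord1 /=.
  by rewrite mulr0 add0r.
have hn : c * (c * mu 0) = 1.
  have := Ho 0%N 0%N; rewrite hp0 -Lm0 Lm_C /Lm size_polyC c0 big_ord1 coefC /=.
  by move=> ->.
have ha : a 1 = c / g by rewrite Ha // hp0 lead_coefC hg.
exists c, (g * mu 0), g; split => //.
  by rewrite ha -hn; field.
by rewrite ha divfK.
Qed.

Lemma alg1 (R : comRingType) (U V W L A B P0 P1 P2 Q0 Q1 Q2 dP0 dP1 dP2 dQ0 dQ1 dQ2 : R) :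
  B * P2 = L * P1 - A * P0 -> B * Q2 = L * Q1 - A * Q0 ->
  B * dP2 = P1 + L * dP1 - A * dP0 -> B * dQ2 = Q1 + L * dQ1 - A * dQ0 ->
  A * (dQ1 * P0 + Q1 * dP0 - (dQ0 * P1 + Q0 * dP1)) = 0 ->
  B * (-(U * P2 * P1) + W * (dQ2 * P1 - Q1 * dP2) - V * (Q1 * P2 + Q2 * P1))
  = L * (-(U * P1 ^+ 2) + W * (dQ1 * P1 - Q1 * dP1) - V *+ 2 * (Q1 * P1))
    - A * (-(U * P1 * P0) + W * (dQ1 * P0 - Q0 * dP1) - V * (Q0 * P1 + Q1 * P0)).
Proof.
move=> h1 h2 h3 h4 hD; apply/eqP; rewrite -subr_eq0; apply/eqP.
transitivity (-(U * P1) * (B * P2 - (L * P1 - A * P0))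
  + W * (P1 * (B * dQ2 - (Q1 + L * dQ1 - A * dQ0)) - Q1 * (B * dP2 - (P1 + L * dP1 - A * dP0)))
  - V * (Q1 * (B * P2 - (L * P1 - A * P0)) + P1 * (B * Q2 - (L * Q1 - A * Q0)))
  + W * (A * (dQ1 * P0 + Q1 * dP0 - (dQ0 * P1 + Q0 * dP1)))); first by ring.
by rewrite h1 h2 h3 h4 hD !subrr; ring.
Qed.

Lemma alg2 (R : comRingType) (U V W L A B P0 P1 P2 Q0 Q1 Q2 dP0 dP1 dP2 dQ0 dQ1 dQ2 : R) :
  B * P2 = L * P1 - A * P0 -> B * Q2 = L * Q1 - A * Q0 ->
  B * dP2 = P1 + L * dP1 - A * dP0 -> B * dQ2 = Q1 + L * dQ1 - A * dQ0 ->
  A * (dQ1 * P0 + Q1 * dP0 - (dQ0 * P1 + Q0 * dP1)) = 0 ->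
  A * (Q1 * P0 - Q0 * P1) = 1 ->
  L * (B * (-(U * P2 * P1) + W * (dQ2 * P1 - Q1 * dP2) - V * (Q1 * P2 + Q2 * P1))
       - A * (-(U * P1 * P0) + W * (dQ1 * P0 - Q0 * dP1) - V * (Q0 * P1 + Q1 * P0)))
  = W + B ^+ 2 * (-(U * P2 ^+ 2) + W * (dQ2 * P2 - Q2 * dP2) - V *+ 2 * (Q2 * P2))
      - A ^+ 2 * (-(U * P0 ^+ 2) + W * (dQ0 * P0 - Q0 * dP0) - V *+ 2 * (Q0 * P0)).
Proof.
move=> h1 h2 h3 h4 hD hC.
rewrite (@alg1 _ U V W L A B P0 P1 P2 Q0 Q1 Q2 dP0 dP1 dP2 dQ0 dQ1 dQ2 h1 h2 h3 h4 hD).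
have -> : B ^+ 2 * (-(U * P2 ^+ 2) + W * (dQ2 * P2 - Q2 * dP2) - V *+ 2 * (Q2 * P2))
  = -(U * (B * P2) ^+ 2) + W * ((B * dQ2) * (B * P2) - (B * Q2) * (B * dP2))
    - V *+ 2 * ((B * Q2) * (B * P2)) by ring.
rewrite h1 h2 h3 h4; apply/eqP; rewrite -subr_eq0; apply/eqP.
transitivity (W * (A * (Q1 * P0 - Q0 * P1) - 1)
   - L * W * (A * (dQ1 * P0 + Q1 * dP0 - (dQ0 * P1 + Q0 * dP1)))); first by ring.
by rewrite hC hD subrr; ring.
Qed.

Lemma alg3 (R : comRingType) (O1 O2 T0 T1 T2 L W V S A2 B2 : R) :
  O2 = L * T1 - O1 -> L * (O2 - O1) = W + B2 * T2 - A2 * T0 ->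
  O1 ^+ 2 - A2 * (T1 * T0) = V ^+ 2 + W * S ->
  O2 ^+ 2 - B2 * (T2 * T1) = V ^+ 2 + W * (S + T1).
Proof.
move=> h1 h2 h3.
have hW : W = L * (O2 - O1) - B2 * T2 + A2 * T0 by rewrite h2; ring.
rewrite mulrDr addrA -h3 hW h1; ring.
Qed.

Lemma cas (C : numClosedFieldType) mu (p : nat -> {poly C}) (a b : nat -> C) :
  (forall n : nat, size (p n) = n.+1) ->
  (forall n m : nat, Lfun mu (p n * p m) = (n == m)%:R) ->
  (forall n : nat, (0 < n)%N -> a n = lead_coef (p n.-1) / lead_coef (p n)) ->
  (forall n : nat, a n.+1 *: p n.+1 =
       ('X - (b n)%:P) * p n - (if n is 0 then 0 else a n *: p n.-1)) ->
  forall k, (a k.+1)%:P * (p1 mu (p k.+1) * p k - p1 mu (p k) * p k.+1) = 1.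
Proof.
move=> Hs Ho Ha Hr; elim=> [|k IH].
  have [q0 [c [d [g [hp0 hq1 hp1' e1 e2]]]]] := base_facts Hs Ho Ha.
  by rewrite q0 hq1 hp0 mul0r subr0 -!polyCM e1.
have R1 := recP Hr k; have R2 := qrec Hs Ho Hr k.
transitivity ((a k.+2)%:P * p1 mu (p k.+2) * p k.+1 - p1 mu (p k.+1) * ((a k.+2)%:P * p k.+2)).
  by ring.
by rewrite R1 R2 -IH; ring.
Qed.

Lemma casD (C : numClosedFieldType) mu (p : nat -> {poly C}) (a b : nat -> C) :
  (forall n : nat, size (p n) = n.+1) ->
  (forall n m : nat, Lfun mu (p n * p m) = (n == m)%:R) ->
  (forall n : nat, (0 < n)%N -> a n = lead_coef (p n.-1) / lead_coef (p n)) ->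
  (forall n : nat, a n.+1 *: p n.+1 =
       ('X - (b n)%:P) * p n - (if n is 0 then 0 else a n *: p n.-1)) ->
  forall k, (a k.+1)%:P * ((p1 mu (p k.+1))^`() * p k + p1 mu (p k.+1) * (p k)^`()
       - ((p1 mu (p k))^`() * p k.+1 + p1 mu (p k) * (p k.+1)^`())) = 0.
Proof.
move=> Hs Ho Ha Hr k.
transitivity (((a k.+1)%:P * (p1 mu (p k.+1) * p k - p1 mu (p k) * p k.+1))^`()).
  by rewrite !derivE; ring.
by rewrite (cas Hs Ho Ha Hr) -polyC1 derivC.
Qed.

Unset Implicit Arguments.
Set Strict Implicit.

Theorem mainTheorem3 (C : numClosedFieldType) (mu : nat -> C)
    (p : nat -> {poly C}) (a b : nat -> C) (W V U : {poly C}) :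
  (forall n : nat, \det (\matrix_(i < n.+1, j < n.+1) mu (i + j)%N) != 0) ->
  (forall n : nat, size (p n) = n.+1) ->
  (forall n m : nat, Lfun mu (p n * p m) = (n == m)%:R) ->
  (forall n : nat, (0 < n)%N -> a n = lead_coef (p n.-1) / lead_coef (p n)) ->
  (forall n : nat, a n.+1 *: p n.+1 =
       ('X - (b n)%:P) * p n - (if n is 0 then 0 else a n *: p n.-1)) ->
  W != 0 ->
  pmul W (sderiv (fser mu)) = sadd (pmul (2%:R *: V) (fser mu)) (pser U) ->
  forall n : nat, (0 < n)%N ->
  [/\ OmegaP mu W V a p n.+1 = ('X - (b n)%:P) * ThetaP mu W V p n - OmegaP mu W V a p n,
      ('X - (b n)%:P) * (OmegaP mu W V a p n.+1 - OmegaP mu W V a p n)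
        = W + a n.+1 ^+ 2 *: ThetaP mu W V p n.+1 - a n ^+ 2 *: ThetaP mu W V p n.-1
    & OmegaP mu W V a p n ^+ 2 - a n ^+ 2 *: (ThetaP mu W V p n * ThetaP mu W V p n.-1)
        = V ^+ 2 + W * \sum_(i < n) ThetaP mu W V p i].
Proof.
move=> _ Hs Ho Ha Hr _ HS n hn.
have ET : forall i, ThetaP mu W V p i = ThP mu W V U p i := ThetaP_eq Hs Ho Hr HS.
have EO : forall i, (0 < i)%N -> OmegaP mu W V a p i = OmP mu W V U a p i :=
  OmegaP_eq Hs Ho Hr HS.
have I1 : forall k, OmP mu W V U a p k.+2
    = ('X - (b k.+1)%:P) * ThP mu W V U p k.+1 - OmP mu W V U a p k.+1.
  move=> k; have R1 := recP Hr k; have R2 := qrec Hs Ho Hr k.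
  rewrite /OmP /ThP /=.
  exact: (@alg1 _ U V W _ _ _ _ _ _ _ _ _ _ _ _ _ _ _ R1 R2 (deriv_rec R1) (deriv_rec R2) (casD Hs Ho Ha Hr k)).
have I2 : forall k, ('X - (b k.+1)%:P) * (OmP mu W V U a p k.+2 - OmP mu W V U a p k.+1)
    = W + (a k.+2)%:P ^+ 2 * ThP mu W V U p k.+2 - (a k.+1)%:P ^+ 2 * ThP mu W V U p k.
  move=> k; have R1 := recP Hr k; have R2 := qrec Hs Ho Hr k.
  rewrite /OmP /ThP /=.
  exact: (@alg2 _ U V W _ _ _ _ _ _ _ _ _ _ _ _ _ _ _ R1 R2 (deriv_rec R1) (deriv_rec R2) (casD Hs Ho Ha Hr k) (cas Hs Ho Ha Hr k)).
case: n hn => [//|k] _.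
rewrite !EO // !ET -!mul_polyC !polyC_exp.
split; [exact: I1 | exact: I2 |].
under eq_bigr do rewrite ET.
elim: k => [|k IH].
  rewrite big_ord1.
  have [q0 [c [d [g [hp0 hq1 hp1' e1 e2]]]]] := base_facts Hs Ho Ha.
  have e1' : (a 1)%:P * (d%:P * c%:P) = 1 by rewrite -!polyCM e1.
  have e2' : (a 1)%:P * g%:P = c%:P by rewrite -polyCM e2.
  rewrite /OmP /ThP /= q0 hq1 hp1' hp0 deriv0 !derivC.
  apply/eqP; rewrite -subr_eq0; apply/eqP.
  set A := (a 1)%:P.
  transitivity (V ^+ 2 * ((A * (d%:P * c%:P)) ^+ 2 - 1)
     - U * W * c%:P ^+ 2 * ((A * d%:P) * (A * g%:P) - A * (c%:P * d%:P))
     - U * W * c%:P ^+ 2 * (A * (d%:P * c%:P) - 1)); first by ring.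
  by rewrite e2' e1'; ring.
rewrite big_ord_recr /=.
exact: (alg3 (I1 k) (I2 k) IH).
Qed.
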